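(* Let $d\in\{2,3\}$, $\kappa>0$, and let $\mathcal{X}\subset\mathbb{R}^d$ be a connected bounded open set. Let $a=(a_1,a_2)\in(\mathbb{C}\setminus\{0\})^2$ and $x=(x_1,x_2)\in\mathcal{X}^2$, and define $\alpha=\kappa^2|G(x_1,x_2)|\sqrt{|a_1||a_2|}$. If $\alpha<1$, then $$\sup_{(\hat{x},\theta)\in\mathbb{S}^{d-1}\times\mathbb{S}^{d-1}}|u^{\infty}(\hat x,\theta)-u^{\infty,b}(\hat x,\theta)|\leq \frac{\kappa^2}{4\pi}\,\frac{2\alpha}{1-\alpha^2}\Big(\alpha\frac{|a_1|+|a_2|}{2}+\sqrt{|a_1||a_2|}\Big).$$
   Context: $G$ is the Green function of the Helmholtz equation with wavenumber $\kappa$: $G(x,y)=\frac{i}{4}H_0^{(1)}(\kappa|x-y|)$ if $d=2$ (with $H_0^{(1)}$ the Hankel function of the first kind and order zero) and $G(x,y)=\frac{e^{i\kappa|x-y|}}{4\pi|x-y|}$ if $d=3$. For $s$ scatterers with intensities $a\in(\mathbb{C}\setminus\{0\})^s$ and pairwise distinct locations $x\in\mathcal{X}^s$, and an incident direction $\theta\in\mathbb{S}^{d-1}$, let $u^{\mathrm{in}}(y)=e^{i\kappa\theta\cdot y}$ and let $u=(u_i)_{1\le i\le s}$ be the solution of the Foldy–Lax system $u_i=u^{\mathrm{in}}(x_i)+\kappa^2\sum_{j\neq i}G(x_i,x_j)a_ju_j$, $i=1,\dots,s$. The far field pattern is $u^{\infty}(\hat x,\theta)=\frac{\kappa^2}{4\pi}\sum_{i=1}^s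 a_iu_ie^{-i\kappa\hat x\cdot x_i}$ and its Born approximation is $u^{\infty,b}(\hat x,\theta)=\frac{\kappa^2}{4\pi}\sum_{i=1}^s a_ie^{-i\kappa(\hat x-\theta)\cdot x_i}$, for $(\hat x,\theta)\in\mathbb{S}^{d-1}\times\mathbb{S}^{d-1}$. Here $s=2$. *)

(* Defs.v *)
From HB Require Import structures.
From mathcomp Require Import all_boot all_order all_algebra.
From mathcomp Require Import all_classical all_reals all_analysis.
From mathcomp Require Import complex.
Set Implicit Arguments. Unset Strict Implicit. Unset Printing Implicit Defensive.
Import Order.TTheory GRing.Theory Num.Theory.
Import numFieldNormedType.Exports.
Local Open Scope ring_scope.
Local Open Scope complex_scope.

Section Defs.
Variable R : realType.

Definition dotp (d : nat) (x y : 'rV[R]_d) : R := \sum_(i < d) x 0 i * y 0 i.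
Definition enorm (d : nat) (x : 'rV[R]_d) : R := Num.sqrt (dotp x x).
Definition sphere (d : nat) : set 'rV[R]_d := [set v | enorm v = 1].

Definition cmod (z : R[i]) : R := Num.sqrt (@complex.Re R z ^+ 2 + @complex.Im R z ^+ 2).
Definition expi (t : R) : R[i] := cos t +i* sin t.

Definition harm (k : nat) : R := \sum_(1 <= j < k.+1) (j%:R)^-1.
Definition euler_gamma : R := limn (fun n : nat => harm n - ln n%:R).

(** Bessel functions of order 0 at a real argument r > 0 (DLMF 10.2.2, 10.8.2) *)
Definition besselJ0 (r : R) : R :=
  limn (series (fun k : nat => (-1) ^+ k * (r / 2) ^+ (2 * k) / (k`!%:R) ^+ 2)).
Definition besselY0 (r : R) : R :=
  (2 / pi) * (ln (r / 2) + euler_gamma) * besselJ0 r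
  + (2 / pi) * limn (series (fun k : nat =>
        (-1) ^+ k.+1 * harm k * (r / 2) ^+ (2 * k) / (k`!%:R) ^+ 2)).
Definition hankel10 (r : R) : R[i] := besselJ0 r +i* besselY0 r.

Definition green (d : nat) (kappa : R) (x y : 'rV[R]_d) : R[i] :=
  let r := enorm (x - y) in
  if d == 2%N then (0 +i* (1 / 4)) * hankel10 (kappa * r)
  else expi (kappa * r) / ((4 * pi * r)%:C).

Definition uin (d : nat) (kappa : R) (theta y : 'rV[R]_d) : R[i] :=
  expi (kappa * dotp theta y).

Definition foldy_lax (d s : nat) (kappa : R) (theta : 'rV[R]_d)
    (a : 'I_s -> R[i]) (x : 'I_s -> 'rV[R]_d) (u : 'I_s -> R[i]) : Prop :=
  forall i : 'I_s, u i = uin kappa theta (x i)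
    + (kappa ^+ 2)%:C * \sum_(j < s | j != i) green kappa (x i) (x j) * a j * u j.

Definition far_field (d s : nat) (kappa : R) (a : 'I_s -> R[i])
    (x : 'I_s -> 'rV[R]_d) (u : 'I_s -> R[i]) (xhat : 'rV[R]_d) : R[i] :=
  (kappa ^+ 2 / (4 * pi))%:C *
    \sum_(i < s) a i * u i * expi (- (kappa * dotp xhat (x i))).
Definition far_field_born (d s : nat) (kappa : R) (a : 'I_s -> R[i])
    (x : 'I_s -> 'rV[R]_d) (xhat theta : 'rV[R]_d) : R[i] :=
  (kappa ^+ 2 / (4 * pi))%:C *
    \sum_(i < s) a i * expi (- (kappa * dotp (xhat - theta) (x i))).
End Defs.

(* Main.v *)
Require Import Defs.
From HB Require Import structures.
From mathcomp Require Import all_boot all_order all_algebra.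
From mathcomp Require Import all_classical all_reals all_analysis.
From mathcomp Require Import complex.
From mathcomp Require Import ring lra.
Import Order.TTheory GRing.Theory Num.Theory.
Import numFieldNormedType.Exports.
Local Open Scope classical_set_scope.
Local Open Scope ring_scope.

Import ComplexField.Normc.
Local Open Scope complex_scope.
Section H.
Variable R : realType.
Implicit Types z w : R[i].

Lemma cmodE z : cmod z = normc z. Proof. by case: z. Qed.
Lemma cmod_ge0 z : 0 <= cmod z. Proof. by rewrite /cmod sqrtr_ge0. Qed.
Lemma cmodM z w : cmod (z * w) = cmod z * cmod w. Proof. by rewrite !cmodE normcM. Qed.
Lemma cmodV z : cmod (z^-1) = (cmod z)^-1. Proof. by rewrite !cmodE normcV. Qed.
Lemma cmodD z w : cmod (z + w) <= cmod z + cmod w. Proof. by rewrite !cmodE le_normcD. Qed.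
Lemma cmodN z : cmod (- z) = cmod z. Proof. by rewrite !cmodE normcN. Qed.
Lemma cmodR (c : R) : 0 <= c -> cmod (c%:C) = c.
Proof. move=> c0; rewrite /cmod /= expr0n /= addr0 sqrtr_sqr ger0_norm //. Qed.
Lemma cmod_expi (t : R) : cmod (expi t) = 1.
Proof. by rewrite /cmod /expi /= cos2Dsin2 sqrtr1. Qed.
Lemma expiD (s t : R) : expi (s + t) = expi s * expi t.
Proof. rewrite /expi cosD sinD; apply/eqP; rewrite eq_complex /=; apply/andP; split; apply/eqP; ring. Qed.
Lemma cmodB1 z : 1 - cmod z <= cmod (1 - z).
Proof.
have := cmodD (1 - z) z; rewrite subrK.
have -> : cmod (1 : R[i]) = 1 by rewrite /cmod /= expr0n /= addr0 expr1n sqrtr1.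
move=> h; rewrite lerBlDr; by [].
Qed.
Lemma sum2 (V : zmodType) (F : 'I_2 -> V) : \sum_(i < 2) F i = F ord0 + F ord_max.
Proof. by rewrite big_ord_recl big_ord1; congr (_ + F _); apply/val_inj. Qed.

Lemma dotpBl d (v w y : 'rV[R]_d) : dotp (v - w) y = dotp v y - dotp w y.
Proof. by rewrite /dotp -sumrB; apply: eq_bigr => i _; rewrite !mxE mulrBl. Qed.

Lemma enormC d (v w : 'rV[R]_d) : enorm (v - w) = enorm (w - v).
Proof.
rewrite /enorm /dotp -opprB; congr Num.sqrt; apply: eq_bigr => i _.
by rewrite !mxE mulrNN.
Qed.

Lemma greenC d k (v w : 'rV[R]_d) : green k v w = green k w v.
Proof. by rewrite /green enormC. Qed.

Lemma div_le (N D M m : R) : 0 < m -> m <= D -> 0 <= N -> N <= M -> N / D <= M / m.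
Proof.
move=> m0 mD N0 NM; have D0 : 0 < D by apply: lt_le_trans mD.
apply: ler_pM => //; first by rewrite invr_ge0 ltW.
by rewrite lef_pV2 ?posrE.
Qed.

Lemma cmod_uin d k (t y : 'rV[R]_d) : cmod (uin k t y) = 1.
Proof. exact: cmod_expi. Qed.

Lemma cmod0 : cmod (0 : R[i]) = 0.
Proof. by rewrite /cmod /= expr0n /= addr0 sqrtr0. Qed.
End H.
Theorem proposition1 (R : realType) (d : nat) (hd : d = 2%N \/ d = 3%N)
    (kappa : R) (hkappa : 0 < kappa)
    (X : set 'rV[R]_d) (hXopen : open X) (hXconn : connected X)
    (hXbdd : bounded_set X)
    (a : 'I_2 -> R[i]) (ha : forall i, a i != 0)
    (x : 'I_2 -> 'rV[R]_d) (hxX : forall i, X (x i))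
    (hxdist : x ord0 != x ord_max) :
  let alpha := kappa ^+ 2 * cmod (green kappa (x ord0) (x ord_max))
               * Num.sqrt (cmod (a ord0) * cmod (a ord_max)) in
  alpha < 1 ->
  forall (theta : 'rV[R]_d) (u : 'I_2 -> R[i]),
    sphere theta -> foldy_lax kappa theta a x u ->
  forall xhat : 'rV[R]_d, sphere xhat ->
    cmod (far_field kappa a x u xhat - far_field_born kappa a x xhat theta)
    <= kappa ^+ 2 / (4 * pi) * (2 * alpha / (1 - alpha ^+ 2))
       * (alpha * ((cmod (a ord0) + cmod (a ord_max)) / 2)
          + Num.sqrt (cmod (a ord0) * cmod (a ord_max))).
Proof.
move=> alpha halpha theta u hth hfl xhat hxh.
set A := cmod (a ord0); set B := cmod (a ord_max).
pose s : R := Num.sqrt (A * B).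
set G := green kappa (x ord0) (x ord_max).
set g := (kappa ^+ 2)%:C * G.
set gn := cmod g.
have A0 : 0 <= A by apply: cmod_ge0.
have B0 : 0 <= B by apply: cmod_ge0.
have gn0 : 0 <= gn by apply: cmod_ge0.
have k20 : 0 <= kappa ^+ 2 by rewrite exprn_ge0 // ltW.
have aE : alpha = gn * s by rewrite /alpha /gn /g cmodM cmodR.
have s2 : s * s = A * B by rewrite -expr2 sqr_sqrtr // mulr_ge0.
have s0 : 0 <= s by apply: sqrtr_ge0.
have al0 : 0 <= alpha by rewrite aE mulr_ge0.
clearbody alpha.
have F0 := hfl ord0; have F1 := hfl ord_max.
rewrite big_mkcond sum2 /= in F0.
rewrite big_mkcond sum2 /= in F1.
rewrite greenC -/G in F1.
rewrite -/G in F0.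
set e0 := uin kappa theta (x ord0) in F0.
set e1 := uin kappa theta (x ord_max) in F1.
set p := g * g * a ord0 * a ord_max.
have cp : cmod p = alpha ^+ 2.
  rewrite /p [cmod (_ * a ord_max)]cmodM [cmod (_ * a ord0)]cmodM [cmod (g * g)]cmodM -/gn -/A -/B aE.
  have -> : (gn * s)^+2 = gn*gn*(s*s) by ring.
  by rewrite s2; ring.
have D1 : 1 - alpha ^+ 2 <= cmod (1 - p) by rewrite -cp cmodB1.
have m0 : 0 < 1 - alpha ^+ 2.
  by rewrite subr_gt0 expr2; nra.
have p1 : 1 - p != 0.
  apply/eqP => h; move: D1; rewrite h cmod0; lra.
have key0 : u ord0 - e0 = (g * a ord_max * e1 + p * e0) / (1 - p).
  apply: (mulfI p1); rewrite [RHS]mulrC divfK //.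
  have h : (1 - p) * (u ord0 - e0) - (g * a ord_max * e1 + p * e0) =
    (u ord0 - (e0 + (kappa ^+ 2)%:C * (0 + G * a ord_max * u ord_max)))
    + g * a ord_max * (u ord_max - (e1 + (kappa ^+ 2)%:C * (G * a ord0 * u ord0 + 0))).
    by rewrite /p /g; ring.
  by apply/eqP; rewrite -subr_eq0 h -F0 -F1 !subrr mulr0 addr0.
have key1 : u ord_max - e1 = (g * a ord0 * e0 + p * e1) / (1 - p).
  apply: (mulfI p1); rewrite [RHS]mulrC divfK //.
  have h : (1 - p) * (u ord_max - e1) - (g * a ord0 * e0 + p * e1) =
    (u ord_max - (e1 + (kappa ^+ 2)%:C * (G * a ord0 * u ord0 + 0)))
    + g * a ord0 * (u ord0 - (e0 + (kappa ^+ 2)%:C * (0 + G * a ord_max * u ord_max))).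
    by rewrite /p /g; ring.
  by apply/eqP; rewrite -subr_eq0 h -F0 -F1 !subrr mulr0 addr0.
have ce0 : cmod e0 = 1 by apply: cmod_uin.
have ce1 : cmod e1 = 1 by apply: cmod_uin.
have X0 : cmod (u ord0 - e0) <= (gn * B + alpha ^+ 2) / (1 - alpha ^+ 2).
  rewrite key0 cmodM cmodV; apply: div_le => //; first exact: cmod_ge0.
  apply: le_trans; first exact: cmodD.
  by rewrite (cmodM _ (g * _)) (cmodM _ p) (cmodM _ g) ce0 ce1 cp !mulr1.
have X1 : cmod (u ord_max - e1) <= (gn * A + alpha ^+ 2) / (1 - alpha ^+ 2).
  rewrite key1 cmodM cmodV; apply: div_le => //; first exact: cmod_ge0.
  apply: le_trans; first exact: cmodD.
  by rewrite (cmodM _ (g * _)) (cmodM _ p) (cmodM _ g) ce0 ce1 cp !mulr1.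
set c := kappa ^+ 2 / (4 * pi).
have c0 : 0 <= c by rewrite /c divr_ge0 // mulr_ge0 // ltW // pi_gt0.
pose ph (i : 'I_2) := expi (- (kappa * dotp xhat (x i))).
have phE : forall i, expi (- (kappa * dotp (xhat - theta) (x i))) = ph i * uin kappa theta (x i).
  by move=> i; rewrite /ph /uin -expiD dotpBl; congr expi; ring.
have diffE : far_field kappa a x u xhat - far_field_born kappa a x xhat theta
   = c%:C * (a ord0 * (u ord0 - e0) * ph ord0 + a ord_max * (u ord_max - e1) * ph ord_max).
  rewrite /far_field /far_field_born !sum2 !phE -/c -/e0 -/e1 /ph; ring.
rewrite diffE cmodM cmodR //.
have cph : forall i, cmod (ph i) = 1 by move=> i; apply: cmod_expi.
apply: le_trans (_ : c * (A * ((gn * B + alpha ^+ 2) / (1 - alpha ^+ 2))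
      + B * ((gn * A + alpha ^+ 2) / (1 - alpha ^+ 2))) <= _).
  apply: ler_wpM2l => //; apply: le_trans; first exact: cmodD.
  rewrite !cmodM !cph !mulr1 -/A -/B.
  by apply: lerD; apply: ler_wpM2l.
rewrite -mulrA; apply: ler_wpM2l => //.
have nz : 1 - alpha ^+ 2 != 0 by rewrite gt_eqF.
have E : A * ((gn * B + alpha ^+ 2) / (1 - alpha ^+ 2))
      + B * ((gn * A + alpha ^+ 2) / (1 - alpha ^+ 2))
      - (2 * alpha / (1 - alpha ^+ 2)) * (alpha * ((A + B) / 2) + s)
      = 2 * gn * (A * B - s * s) / (1 - alpha ^+ 2).
  by rewrite aE; field; rewrite -aE.
by rewrite -subr_le0 E s2 subrr mulr0 mul0r.
Qed.
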